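(* Let $\alpha=\{a_k\}_{k\ge1}$ be a sequence of positive integers such that $A(m):=\#\{k: a_k=m\}$ satisfies $A(m)=O(m^\nu)$ for some $\nu>0$. Then $\lim_{N\to\infty}E[U_j^N]=I(\alpha;j)<\infty$ for all $j\ge2$.
   Context: For $N\ge2$, coupon type $k\in\{1,\dots,N\}$ has probability $a_k/\sum_{i=1}^Na_i$; $U_j^N$ is the number of empty album places of the $j$-th collector when the first collector completes her set (each collector passes duplicates to the next one), with $$E[U_j^N]=\sum_{k=1}^N\int_0^\infty a_k e^{-a_k t}\frac{(a_kt)^{j-1}}{(j-1)!}\prod_{i\ne k,\,1\le i\le N}\big(1-e^{-a_i t}\big)\,dt.$$ $x_\alpha:=\inf\{x\in[0,1]:\sum_k x^{a_k}=\infty\}$, $L(x;\alpha;j):=\sum_{k}a_k^j\frac{x^{a_k}}{1-x^{a_k}}$, $F(x;\alpha):=\prod_{k}(1-x^{a_k})$, $I(\alpha;j):=\frac{1}{(j-1)!}\int_0^{x_\alpha}L(x;\alpha;j)F(x;\alpha)|\ln x|^{j-1}\frac{dx}{x}$. *)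

(* Defs.v *)
From Stdlib Require Import Arith Factorial Reals Lra Lia List ClassicalEpsilon.
Open Scope R_scope.

(* Indexing convention: the paper's a_1, a_2, ... is [a 0], [a 1], ...;
   the first N coupon types are [a 0], ..., [a (N-1)]. *)

(* The limit of a real sequence (chosen classically; meaningful when it converges). *)
Definition Rlim (u : nat -> R) : R :=
  epsilon (inhabits 0) (fun l => Un_cv u l).

(* A(m) restricted to the first n indices: #{k < n : a_k = m}. *)
Definition countA (a : nat -> nat) (m n : nat) : nat :=
  length (filter (fun k => Nat.eqb (a k) m) (seq 0 n)).

(* sum_k x^{a_k} = +infinity  (nonnegative terms: partial sums unbounded) *)
Definition series_diverges (a : nat -> nat) (x : R) : Prop :=
  forall M : R, exists n : nat, M < sum_f_R0 (fun k => x ^ (a k)) n.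

Definition is_x_alpha (a : nat -> nat) (xa : R) : Prop :=
  (forall x, 0 <= x <= 1 -> series_diverges a x -> xa <= x) /\
  (forall b, (forall x, 0 <= x <= 1 -> series_diverges a x -> b <= x) -> b <= xa).

Definition Lfun (a : nat -> nat) (j : nat) (x : R) : R :=
  Rlim (fun n => sum_f_R0 (fun k => INR (a k) ^ j * x ^ (a k) / (1 - x ^ (a k))) n).

Definition Ffun (a : nat -> nat) (x : R) : R :=
  Rlim (fun n => prod_f_R0 (fun k => 1 - x ^ (a k)) n).

Definition I_integrand (a : nat -> nat) (j : nat) (x : R) : R :=
  / INR (fact (j - 1)) * Lfun a j x * Ffun a x * (Rabs (ln x)) ^ (j - 1) / x.

Definition EU_integrand (a : nat -> nat) (j N : nat) (t : R) : R :=
  sum_f_R0 (fun k =>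
      INR (a k) * exp (- INR (a k) * t) * (INR (a k) * t) ^ (j - 1) / INR (fact (j - 1))
      * prod_f_R0 (fun i => if Nat.eq_dec i k then 1 else 1 - exp (- INR (a i) * t)) (N - 1))
    (N - 1).

Definition improper_int (f : R -> R) (a b l : R) : Prop :=
  forall eps, 0 < eps -> exists d, 0 < d /\
    forall u v, a < u -> u < a + d -> b - d < v -> v < b -> u <= v ->
      exists pr : Riemann_integrable f u v, Rabs (RiemannInt pr - l) < eps.

Definition improper_int_inf (f : R -> R) (a l : R) : Prop :=
  forall eps, 0 < eps -> exists T0, forall T, T0 <= T -> a <= T ->
    exists pr : Riemann_integrable f a T, Rabs (RiemannInt pr - l) < eps.

(* Main.v *)
Require Import Defs.
From Stdlib Require Import Reals Lra Lia List Arith Factorial ClassicalEpsilon.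
From Coquelicot Require Import Coquelicot.
Open Scope R_scope.

Lemma Rlim_eq : forall u l, Un_cv u l -> Rlim u = l.
Proof.
  intros u l H. unfold Rlim.
  apply (UL_sequence u). 2: exact H.
  apply (epsilon_spec (inhabits 0) (fun l => Un_cv u l)). exists l; exact H.
Qed.

Lemma exp_pow_ge : forall q y, 0 <= y -> y ^ q <= INR (fact q) * exp y.
Proof.
  intros q y Hy.
  assert (Hin : exp_in y (exp y)).
  { unfold exp. destruct (exist_exp y) as [l Hl]. exact Hl. }
  assert (H1 : sum_f_R0 (fun i => / INR (fact i) * y ^ i) q <= exp y).
  { apply sum_incr. exact Hin. intros n. apply Rmult_le_pos.
    left; apply Rinv_0_lt_compat, INR_fact_lt_0. apply pow_le; exact Hy. }
  assert (H2 : / INR (fact q) * y ^ q <= sum_f_R0 (fun i => / INR (fact i) * y ^ i) q).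
  { destruct q. simpl. lra.
    rewrite tech5. assert (0 <= sum_f_R0 (fun i => / INR (fact i) * y ^ i) q).
    { apply cond_pos_sum. intros n. apply Rmult_le_pos.
      left; apply Rinv_0_lt_compat, INR_fact_lt_0. apply pow_le; exact Hy. }
    lra. }
  assert (Hf := INR_fact_lt_0 q).
  assert (y ^ q = INR (fact q) * (/ INR (fact q) * y ^ q)) by (field; lra).
  rewrite H. apply Rmult_le_compat_l; lra.
Qed.

Fixpoint sumn (f : nat -> R) (n : nat) : R :=
  match n with O => 0 | S p => sumn f p + f p end.

Lemma sum_sumn : forall f n, sum_f_R0 f n = sumn f (S n).
Proof. intros f n; induction n; simpl. lra. rewrite IHn. simpl. lra. Qed.

Lemma countA_S : forall a m n,
  countA a m (S n) = (countA a m n + (if Nat.eqb (a n) m then 1 else 0))%nat.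
Proof.
  intros. unfold countA. rewrite seq_S, filter_app, length_app. simpl.
  destruct (Nat.eqb (a n) m); simpl; lia.
Qed.

Lemma sum_indic : forall (phi : nat -> R) c V, (c <= V)%nat ->
  sum_f_R0 (fun m => (if Nat.eqb c m then 1 else 0) * phi m) V = phi c.
Proof.
  intros phi c V. induction V; intros H.
  - simpl. assert (c = 0%nat) by lia. subst. simpl. lra.
  - destruct (Nat.eq_dec c (S V)).
    + subst. rewrite tech5, Nat.eqb_refl.
      assert (sum_f_R0 (fun m => (if Nat.eqb (S V) m then 1 else 0) * phi m) V = 0).
      { clear. assert (forall W, (W <= V)%nat ->
          sum_f_R0 (fun m => (if Nat.eqb (S V) m then 1 else 0) * phi m) W = 0).
        { induction W; intros HW.
          - simpl. lra.
          - rewrite tech5, IHW by lia. destruct (Nat.eqb (S V) (S W)) eqn:E.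
            apply Nat.eqb_eq in E; lia. lra. }
        apply H; lia. }
      rewrite H0. lra.
    + rewrite tech5, IHV by lia.
      destruct (Nat.eqb c (S V)) eqn:E. apply Nat.eqb_eq in E; lia. lra.
Qed.

Lemma regroup : forall a (phi : nat -> R) n V, (forall k, (k < n)%nat -> (a k <= V)%nat) ->
  sumn (fun k => phi (a k)) n = sum_f_R0 (fun m => INR (countA a m n) * phi m) V.
Proof.
  intros a phi n V. induction n; intros H.
  - simpl. symmetry. apply sum_eq_R0. intros. unfold countA. simpl. lra.
  - simpl. rewrite IHn by (intros; apply H; lia).
    assert (E : sum_f_R0 (fun m => INR (countA a m (S n)) * phi m) V =
      sum_f_R0 (fun m => INR (countA a m n) * phi m) V +
      sum_f_R0 (fun m => (if Nat.eqb (a n) m then 1 else 0) * phi m) V).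
    { rewrite <- plus_sum. apply sum_eq. intros i _. rewrite countA_S, plus_INR.
      destruct (Nat.eqb (a n) i); simpl; lra. }
    rewrite E, sum_indic by (apply H; lia). lra.
Qed.

Lemma exists_bound : forall (a : nat -> nat) n, exists V, forall k, (k < n)%nat -> (a k <= V)%nat.
Proof.
  intros a n. induction n. exists 0%nat; intros; lia.
  destruct IHn as [V HV]. exists (Nat.max V (a n)). intros k Hk.
  destruct (Nat.eq_dec k n). subst; lia. specialize (HV k ltac:(lia)). lia.
Qed.


Lemma exp_le : forall x y, x <= y -> exp x <= exp y.
Proof. intros x y H. destruct H. left; apply exp_increasing; auto. subst; lra. Qed.

Lemma exp_mult_pow : forall m y, exp (INR m * y) = exp y ^ m.
Proof.
  induction m; intros y. simpl. rewrite Rmult_0_l, exp_0. reflexivity.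
  rewrite S_INR, <- tech_pow_Rmult, <- IHm, <- exp_plus. f_equal. ring.
Qed.

Lemma term_bound : forall q m t, 0 <= t ->
  (INR m * t) ^ q * exp (- INR m * t) <= INR (fact q) * 2 ^ q * exp (- t / 2) ^ m.
Proof.
  intros q m t Ht.
  assert (Hm : 0 <= INR m) by apply pos_INR.
  assert (H1 := exp_pow_ge q (INR m * t / 2) ltac:(apply Rmult_le_pos; [apply Rmult_le_pos|]; lra)).
  rewrite <- exp_mult_pow.
  assert (E1 : (INR m * t) ^ q = 2 ^ q * (INR m * t / 2) ^ q).
  { rewrite <- Rpow_mult_distr. f_equal. field. }
  set (z := exp (INR m * (- t / 2))).
  assert (E2 : exp (- INR m * t) = z * z).
  { unfold z. rewrite <- !exp_plus. f_equal. field. }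
  assert (E3 : exp (INR m * t / 2) * z = 1).
  { unfold z. rewrite <- exp_plus, <- exp_0. f_equal. field. }
  rewrite E1, E2.
  assert (Hp := pow_le 2 q ltac:(lra)).
  assert (Hz : 0 < z) by apply exp_pos.
  assert (H2 : (INR m * t / 2) ^ q * z <= INR (fact q)).
  { rewrite <- (Rmult_1_r (INR (fact q))), <- E3, <- Rmult_assoc.
    apply Rmult_le_compat_r; lra. }
  replace (2 ^ q * (INR m * t / 2) ^ q * (z * z)) with (2 ^ q * ((INR m * t / 2) ^ q * z) * z) by ring.
  replace (INR (fact q) * 2 ^ q * z) with (2 ^ q * INR (fact q) * z) by ring.
  apply Rmult_le_compat_r. lra. apply Rmult_le_compat_l; lra.
Qed.

Lemma geom_bound : forall r V, 0 <= r < 1 ->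
  sum_f_R0 (fun i => r ^ i) V <= / (1 - r).
Proof.
  intros r V Hr. rewrite tech3 by lra.
  assert (0 <= r ^ S V) by (apply pow_le; lra).
  unfold Rdiv. rewrite <- (Rmult_1_l (/ (1 - r))) at 2.
  apply Rmult_le_compat_r. left; apply Rinv_0_lt_compat; lra. lra.
Qed.

Lemma KL : forall q t V, (1 <= q)%nat -> 0 < t ->
  t ^ q * sum_f_R0 (fun m => INR m ^ q * exp (- INR m * t)) V <=
  INR (fact q) * 2 ^ q * (exp (- t / 2) / (1 - exp (- t / 2))).
Proof.
  intros q t V Hq Ht.
  set (r := exp (- t / 2)).
  assert (Hr0 : 0 < r) by apply exp_pos.
  assert (Hr1 : r < 1). { unfold r. rewrite <- exp_0. apply exp_increasing. lra. }
  assert (Hc : 0 <= INR (fact q) * 2 ^ q).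
  { apply Rmult_le_pos. apply pos_INR. apply pow_le; lra. }
  rewrite scal_sum.
  assert (Hterm : forall m, INR m ^ q * exp (- INR m * t) * t ^ q <= INR (fact q) * 2 ^ q * r ^ m).
  { intros m. eapply Rle_trans; [| apply (term_bound q m t); lra]. right. rewrite Rpow_mult_distr. ring. }
  assert (H0 : INR 0 ^ q * exp (- INR 0 * t) * t ^ q = 0).
  { destruct q. lia. simpl. ring. }
  destruct V.
  - unfold sum_f_R0. rewrite H0. apply Rmult_le_pos. lra. left. apply Rdiv_lt_0_compat; lra.
  - rewrite decomp_sum by lia. cbv beta. rewrite H0, Rplus_0_l. simpl pred.
    apply Rle_trans with (sum_f_R0 (fun i => INR (fact q) * 2 ^ q * r * r ^ i) V).
    + apply sum_Rle. intros i _. replace (INR (fact q) * 2 ^ q * r * r ^ i) with (INR (fact q) * 2 ^ q * r ^ (S i)) by (simpl; ring). apply Hterm.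
    + replace (sum_f_R0 (fun i => INR (fact q) * 2 ^ q * r * r ^ i) V) with
        (sum_f_R0 (fun i => r ^ i) V * (INR (fact q) * 2 ^ q * r)).
      2:{ rewrite Rmult_comm, scal_sum. apply sum_eq. intros; ring. }
      assert (G := geom_bound r V ltac:(lra)).
      unfold Rdiv.
      replace (INR (fact q) * 2 ^ q * (r * / (1 - r))) with (/ (1 - r) * (INR (fact q) * 2 ^ q * r)) by ring.
      apply Rmult_le_compat_r. apply Rmult_le_pos; lra. exact G.
Qed.

Lemma SB : forall (a : nat -> nat) C p j t n,
  (forall k, (0 < a k)%nat) -> 0 <= C ->
  (forall m n, (1 <= m)%nat -> INR (countA a m n) <= C * INR m ^ p) ->
  (1 <= j)%nat -> 0 < t ->
  t ^ (p + j) * sumn (fun k => INR (a k) ^ j * exp (- INR (a k) * t)) n <=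
  C * (INR (fact (p + j)) * 2 ^ (p + j) * (exp (- t / 2) / (1 - exp (- t / 2)))).
Proof.
  intros a C p j t n Ha HC Hcnt Hj Ht.
  destruct (exists_bound a n) as [V HV].
  rewrite (regroup a (fun m => INR m ^ j * exp (- INR m * t)) n V HV).
  assert (Hle : sum_f_R0 (fun m => INR (countA a m n) * (INR m ^ j * exp (- INR m * t))) V <=
     C * sum_f_R0 (fun m => INR m ^ (p + j) * exp (- INR m * t)) V).
  { rewrite scal_sum. apply sum_Rle. intros m _.
    destruct m.
    - change (INR 0) with 0. rewrite !pow_i by lia. right; ring.
    - assert (Hc := Hcnt (S m) n ltac:(lia)).
      rewrite pow_add.
      assert (0 <= INR (S m) ^ j * exp (- INR (S m) * t)).
      { apply Rmult_le_pos. apply pow_le, pos_INR. left; apply exp_pos. }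
      replace (INR (S m) ^ p * INR (S m) ^ j * exp (- INR (S m) * t) * C) with
        (C * INR (S m) ^ p * (INR (S m) ^ j * exp (- INR (S m) * t))) by ring.
      apply Rmult_le_compat_r; lra. }
  assert (Ht' : 0 <= t ^ (p + j)) by (apply pow_le; lra).
  eapply Rle_trans. apply Rmult_le_compat_l. exact Ht'. exact Hle.
  replace (t ^ (p + j) * (C * sum_f_R0 (fun m => INR m ^ (p + j) * exp (- INR m * t)) V))
    with (C * (t ^ (p + j) * sum_f_R0 (fun m => INR m ^ (p + j) * exp (- INR m * t)) V)) by ring.
  apply Rmult_le_compat_l. exact HC. apply KL. lia. exact Ht.
Qed.


Lemma prod_01 : forall c n, (forall i, 0 <= c i <= 1) -> 0 <= prod_f_R0 c n <= 1.
Proof.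
  intros c n H. induction n; simpl. apply H.
  destruct (H (S n)). destruct IHn. split. apply Rmult_le_pos; lra.
  rewrite <- (Rmult_1_l 1). apply Rmult_le_compat; lra.
Qed.

Lemma prod_decr : forall c n m, (forall i, 0 <= c i <= 1) -> (m <= n)%nat ->
  prod_f_R0 c n <= prod_f_R0 c m.
Proof.
  intros c n m H Hmn. induction Hmn. lra.
  simpl. destruct (prod_01 c m0 H). destruct (H (S m0)).
  apply Rle_trans with (prod_f_R0 c m0); auto.
  rewrite <- (Rmult_1_r (prod_f_R0 c m0)) at 2. apply Rmult_le_compat_l; lra.
Qed.

Lemma prod_skip_aux : forall c k b M, (forall i, 0 <= c i <= 1) -> 0 <= b ->
  (forall i, (i <= M)%nat -> i <> k -> c i <= b) ->
  forall m, (m <= M)%nat -> prod_f_R0 c m <= b ^ (if Nat.leb k m then m else S m).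
Proof.
  intros c k b M H Hb Hc m. induction m; intros Hm.
  - simpl. destruct k; simpl. apply H. rewrite Rmult_1_r. apply Hc; lia.
  - simpl prod_f_R0. assert (IH := IHm ltac:(lia)). destruct (prod_01 c m H).
    destruct (H (S m)).
    destruct (Nat.leb k m) eqn:E1.
    + apply Nat.leb_le in E1. assert (Nat.leb k (S m) = true) by (apply Nat.leb_le; lia).
      rewrite H4. replace (b ^ S m) with (b ^ m * b) by (simpl; ring).
      apply Rmult_le_compat; try lra. apply Hc; lia.
    + apply Nat.leb_gt in E1. destruct (Nat.eq_dec k (S m)).
      * assert (Nat.leb k (S m) = true) by (apply Nat.leb_le; lia). rewrite H4.
        rewrite <- (Rmult_1_r (b ^ S m)). apply Rmult_le_compat; lra.
      * assert (Nat.leb k (S m) = false) by (apply Nat.leb_gt; lia). rewrite H4.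
        replace (b ^ S (S m)) with (b ^ S m * b) by (simpl; ring).
        apply Rmult_le_compat; try lra. apply Hc; lia.
Qed.

Lemma prod_skip_bound : forall c k b M n, (forall i, 0 <= c i <= 1) -> 0 <= b ->
  (forall i, (i <= M)%nat -> i <> k -> c i <= b) -> (M <= n)%nat ->
  prod_f_R0 c n <= b ^ M.
Proof.
  intros c k b M n H Hb Hc Hn.
  apply Rle_trans with (prod_f_R0 c M). apply prod_decr; auto.
  assert (A1 := prod_skip_aux c k b M H Hb Hc M (le_n M)).
  destruct (Nat.leb k M). exact A1.
  destruct (Rle_lt_dec b 1).
  - eapply Rle_trans. exact A1. simpl. rewrite <- (Rmult_1_l (b ^ M)) at 2.
    apply Rmult_le_compat_r. apply pow_le; lra. lra.
  - destruct (prod_01 c M H). apply Rle_trans with 1. lra.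
    apply pow_R1_Rle. lra.
Qed.

Lemma sum_ge_term : forall f n i, (forall k, 0 <= f k) -> (i <= n)%nat -> f i <= sum_f_R0 f n.
Proof.
  intros f n i H Hi. induction n.
  - assert (i = 0%nat) by lia. subst. simpl. lra.
  - destruct (Nat.eq_dec i (S n)). subst. rewrite tech5.
    assert (0 <= sum_f_R0 f n) by (apply cond_pos_sum; auto). lra.
    rewrite tech5. specialize (H (S n)). assert (f i <= sum_f_R0 f n) by (apply IHn; lia). lra.
Qed.

Definition Pi (a : nat -> nat) (N k : nat) (t : R) : R :=
  prod_f_R0 (fun i => if Nat.eq_dec i k then 1 else 1 - exp (- INR (a i) * t)) (N - 1).

Definition Sg (a : nat -> nat) (j : nat) (t : R) (n : nat) : R :=
  sumn (fun k => INR (a k) ^ j * exp (- INR (a k) * t)) n.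

Lemma fac01 : forall (a : nat -> nat) k t, 0 <= t ->
  forall i, 0 <= (if Nat.eq_dec i k then 1 else 1 - exp (- INR (a i) * t)) <= 1.
Proof.
  intros a k t Ht i. destruct (Nat.eq_dec i k). lra.
  assert (exp (- INR (a i) * t) <= 1).
  { rewrite <- exp_0. apply exp_le. assert (0 <= INR (a i)) by apply pos_INR. nra. }
  assert (0 < exp (- INR (a i) * t)) by apply exp_pos. lra.
Qed.

Lemma g_bound : forall a j N t P, (1 <= j)%nat -> 0 <= t -> 0 <= P ->
  (forall k, (k <= N - 1)%nat -> Pi a N k t <= P) ->
  0 <= EU_integrand a j N t <= t ^ (j - 1) * P / INR (fact (j - 1)) * Sg a j t (S (N - 1)).
Proof.
  intros a j N t P Hj Ht HP HPi.
  unfold EU_integrand, Sg. rewrite <- sum_sumn.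
  assert (Hf := INR_fact_lt_0 (j - 1)).
  assert (E : forall k, INR (a k) * exp (- INR (a k) * t) * (INR (a k) * t) ^ (j - 1) / INR (fact (j - 1)) *
      prod_f_R0 (fun i => if Nat.eq_dec i k then 1 else 1 - exp (- INR (a i) * t)) (N - 1) =
      (INR (a k) ^ j * exp (- INR (a k) * t)) * (t ^ (j - 1) / INR (fact (j - 1)) * Pi a N k t)).
  { intros k. unfold Pi. set (j1 := (j - 1)%nat). assert (Ej : j = S j1). { unfold j1. clear - Hj. lia. } rewrite Ej at 1.
    rewrite Rpow_mult_distr. rewrite <- tech_pow_Rmult. field. apply Rgt_not_eq, INR_fact_lt_0. }
  split.
  - apply cond_pos_sum. intros k. rewrite E. apply Rmult_le_pos.
    apply Rmult_le_pos. apply pow_le, pos_INR. left; apply exp_pos.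
    apply Rmult_le_pos. apply Rmult_le_pos. apply pow_le; lra. left; apply Rinv_0_lt_compat; lra.
    apply prod_01. apply fac01; auto.
  - rewrite scal_sum. apply sum_Rle. intros k Hk. rewrite E.
    apply Rmult_le_compat_l.
    apply Rmult_le_pos. apply pow_le, pos_INR. left; apply exp_pos.
    replace (t ^ (j - 1) * P / INR (fact (j - 1))) with (t ^ (j - 1) / INR (fact (j - 1)) * P) by (field; lra).
    apply Rmult_le_compat_l. apply Rmult_le_pos. apply pow_le; lra. left; apply Rinv_0_lt_compat; lra.
    apply HPi; lia.
Qed.


Lemma Rdiv_le_0_compat : forall x y, 0 <= x -> 0 < y -> 0 <= x / y.
Proof. intros. unfold Rdiv. apply Rmult_le_pos. lra. left; apply Rinv_0_lt_compat; lra. Qed.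

Lemma pow_le_1 : forall t n, 0 <= t <= 1 -> t ^ n <= 1.
Proof. intros. rewrite <- (pow1 n). apply pow_incr. lra. Qed.

Lemma small_t : forall t, 0 < t -> t * (exp (- t / 2) / (1 - exp (- t / 2))) <= 2.
Proof.
  intros t Ht. set (r := exp (- t / 2)).
  assert (Hr1 : r < 1). { unfold r. rewrite <- exp_0. apply exp_increasing. lra. }
  assert (Hr0 : 0 < r) by apply exp_pos.
  assert (H1 := exp_ineq1_le (t / 2)).
  assert (H2 : r * exp (t / 2) = 1). { unfold r. rewrite <- exp_plus, <- exp_0. f_equal. field. }
  assert (H3 : r * (1 + t / 2) <= 1). { rewrite <- H2. apply Rmult_le_compat_l; lra. }
  unfold Rdiv. rewrite <- Rmult_assoc.
  apply Rmult_le_reg_r with (1 - r). lra.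
  rewrite Rmult_assoc, Rinv_l by lra. lra.
Qed.

Lemma large_t : forall t, 1 <= t ->
  exp (- t / 2) / (1 - exp (- t / 2)) <= exp (- t / 2) / (1 - exp (- 1 / 2)).
Proof.
  intros t Ht.
  assert (H1 : exp (- t / 2) <= exp (- 1 / 2)) by (apply exp_le; lra).
  assert (H2 : exp (- 1 / 2) < 1) by (rewrite <- exp_0; apply exp_increasing; lra).
  assert (H0 := exp_pos (- t / 2)).
  unfold Rdiv. apply Rmult_le_compat_l. lra. apply Rinv_le_contravar; lra.
Qed.


Lemma Dom : forall (a : nat -> nat) C p j,
  (forall k, (0 < a k)%nat) -> 0 <= C ->
  (forall m n, (1 <= m)%nat -> INR (countA a m n) <= C * INR m ^ p) ->
  (2 <= j)%nat ->
  exists K, 0 <= K /\ forall N t, (S (p + j) <= N)%nat -> 0 <= t ->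
    EU_integrand a j N t <= K * exp (- t / 2).
Proof.
  intros a C p j Ha HC Hcnt Hj.
  set (M := (p + j)%nat).
  set (B := sum_f_R0 (fun i => INR (a i)) M).
  set (Q := INR (fact M) * 2 ^ M).
  set (f := INR (fact (j - 1))).
  set (c1 := exp (- 1 / 2)).
  assert (Hf : 0 < f) by apply INR_fact_lt_0.
  assert (HQ : 0 <= Q) by (apply Rmult_le_pos; [apply pos_INR | apply pow_le; lra]).
  assert (HB : 0 <= B) by (apply cond_pos_sum; intros; apply pos_INR).
  assert (HBM : 0 <= B ^ M) by (apply pow_le; lra).
  assert (Hc1 : c1 < 1) by (unfold c1; rewrite <- exp_0; apply exp_increasing; lra).
  assert (Hc1' : 0 < c1) by apply exp_pos.
  set (K1 := 2 * B ^ M * C * Q * exp (1 / 2) / f).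
  set (K2 := C * Q / (f * (1 - c1))).
  assert (HK1 : 0 <= K1).
  { unfold K1. apply Rdiv_le_0_compat; [ | exact Hf]. apply Rmult_le_pos; [ | left; apply exp_pos].
    apply Rmult_le_pos; [|exact HQ]. apply Rmult_le_pos; [|exact HC]. apply Rmult_le_pos; lra. }
  assert (HK2 : 0 <= K2).
  { unfold K2. apply Rdiv_le_0_compat. apply Rmult_le_pos; [exact HC|exact HQ].
    apply Rmult_lt_0_compat; lra. }
  exists (K1 + K2). split. lra.
  intros N t HN Ht.
  assert (Hr0 := exp_pos (- t / 2)).
  destruct (Rle_lt_dec t 1) as [Ht1 | Ht1].
  - destruct Ht as [Ht | Ht].
    2:{ subst t. destruct (g_bound a j N 0 1 ltac:(lia) ltac:(lra) ltac:(lra)) as [_ G].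
        { intros k Hk. apply prod_01. apply fac01; lra. }
        rewrite pow_i in G by lia. unfold Rdiv in G. rewrite !Rmult_0_l in G.
        apply Rle_trans with 0. exact G. apply Rmult_le_pos; lra. }
    destruct (g_bound a j N t ((B * t) ^ M) ltac:(lia) ltac:(lra)) as [_ G].
    { apply pow_le. apply Rmult_le_pos; lra. }
    { intros k Hk. unfold Pi. apply (prod_skip_bound _ k (B * t) M).
      apply fac01; lra. apply Rmult_le_pos; lra.
      intros i Hi Hik. destruct (Nat.eq_dec i k). contradiction.
      assert (E1 := exp_ineq1_le (- INR (a i) * t)).
      assert (E2 : INR (a i) <= B) by (apply (sum_ge_term (fun i => INR (a i))); [intros; apply pos_INR | exact Hi]).
      assert (INR (a i) * t <= B * t) by (apply Rmult_le_compat_r; lra). lra.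
      unfold M in *. lia. }
    assert (S1 := SB a C p j t (S (N - 1)) Ha HC Hcnt ltac:(lia) Ht).
    fold M in S1. fold Q in S1. replace (INR (fact M) * 2 ^ M * (exp (- t / 2) / (1 - exp (- t / 2))))
       with (Q * (exp (- t / 2) / (1 - exp (- t / 2)))) in S1 by (unfold Q; ring).
    set (rho := exp (- t / 2) / (1 - exp (- t / 2))) in *.
    set (X := Sg a j t (S (N - 1))) in *. fold f in G.
    assert (T1 : t ^ (j - 1) <= t).
    { replace (j - 1)%nat with (S (j - 2)) by lia. simpl.
      assert (t ^ (j - 2) <= 1) by (apply pow_le_1; lra).
      assert (0 <= t ^ (j - 2)) by (apply pow_le; lra). nra. }
    assert (T0 : 0 <= t ^ (j - 1)) by (apply pow_le; lra).
    assert (Hr1 : exp (- t / 2) < 1) by (rewrite <- exp_0; apply exp_increasing; lra).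
    assert (Hrho : 0 <= rho) by (unfold rho; apply Rdiv_le_0_compat; lra).
    assert (ST := small_t t Ht). fold rho in ST.
    assert (Step1 : t ^ (j - 1) * (B * t) ^ M / f * X = (B ^ M / f) * t ^ (j - 1) * (t ^ M * X)).
    { rewrite Rpow_mult_distr. field. lra. }
    assert (Hbf : 0 <= B ^ M / f) by (apply Rdiv_le_0_compat; lra).
    assert (Step2 : (B ^ M / f) * t ^ (j - 1) * (t ^ M * X) <= (B ^ M / f) * t ^ (j - 1) * (C * (Q * rho))).
    { apply Rmult_le_compat_l. apply Rmult_le_pos; lra. exact S1. }
    assert (Step3 : (B ^ M / f) * t ^ (j - 1) * (C * (Q * rho)) <= (B ^ M / f) * C * Q * 2).
    { replace ((B ^ M / f) * t ^ (j - 1) * (C * (Q * rho))) with ((B ^ M / f) * C * Q * (t ^ (j - 1) * rho)) by ring.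
      apply Rmult_le_compat_l. apply Rmult_le_pos; [apply Rmult_le_pos|]; lra.
      apply Rle_trans with (t * rho). apply Rmult_le_compat_r; lra. exact ST. }
    assert (Step4 : (B ^ M / f) * C * Q * 2 <= K1 * exp (- t / 2)).
    { unfold K1. assert (exp (1 / 2) * exp (- t / 2) >= 1).
      { rewrite <- exp_plus. assert (H0 : exp 0 <= exp (1 / 2 + - t / 2)) by (apply exp_le; lra).
        rewrite exp_0 in H0. lra. }
      replace (2 * B ^ M * C * Q * exp (1 / 2) / f * exp (- t / 2)) with
        ((B ^ M / f) * C * Q * 2 * (exp (1 / 2) * exp (- t / 2))) by (field; lra).
      rewrite <- (Rmult_1_r ((B ^ M / f) * C * Q * 2)) at 1.
      apply Rmult_le_compat_l. apply Rmult_le_pos; [|lra]. apply Rmult_le_pos; [apply Rmult_le_pos|]; lra. lra. }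
    assert (0 <= K2 * exp (- t / 2)) by (apply Rmult_le_pos; lra).
    rewrite Step1 in G. lra.
  - destruct (g_bound a j N t 1 ltac:(lia) ltac:(lra) ltac:(lra)) as [_ G].
    { intros k Hk. apply prod_01. apply fac01; lra. }
    assert (S1 := SB a C p j t (S (N - 1)) Ha HC Hcnt ltac:(lia) ltac:(lra)).
    fold M in S1. fold Q in S1. replace (INR (fact M) * 2 ^ M * (exp (- t / 2) / (1 - exp (- t / 2))))
       with (Q * (exp (- t / 2) / (1 - exp (- t / 2)))) in S1 by (unfold Q; ring).
    set (X := Sg a j t (S (N - 1))) in *. fold f in G.
    assert (HX : 0 <= X).
    { unfold X, Sg. rewrite <- sum_sumn. apply cond_pos_sum. intros. apply Rmult_le_pos.
      apply pow_le, pos_INR. left; apply exp_pos. }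
    assert (T1 : t ^ (j - 1) <= t ^ M) by (apply Rle_pow; [lra | unfold M; lia]).
    assert (LT := large_t t ltac:(lra)). fold c1 in LT.
    assert (Step1 : t ^ (j - 1) * 1 / f * X <= t ^ M * X / f).
    { unfold Rdiv. rewrite Rmult_1_r. replace (t ^ M * X * / f) with (t ^ M * / f * X) by ring.
      apply Rmult_le_compat_r. lra. apply Rmult_le_compat_r. left; apply Rinv_0_lt_compat; lra. lra. }
    assert (Step2 : t ^ M * X / f <= C * (Q * (exp (- t / 2) / (1 - c1))) / f).
    { unfold Rdiv at 1 3. apply Rmult_le_compat_r. left; apply Rinv_0_lt_compat; lra.
      eapply Rle_trans. exact S1. apply Rmult_le_compat_l. lra. apply Rmult_le_compat_l. lra. exact LT. }
    assert (Step3 : C * (Q * (exp (- t / 2) / (1 - c1))) / f = K2 * exp (- t / 2)).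
    { unfold K2. field. split; lra. }
    assert (0 <= K1 * exp (- t / 2)) by (apply Rmult_le_pos; lra).
    lra.
Qed.

Lemma Sg_le : forall a j t n, 0 <= t -> Sg a j t n <= sumn (fun k => INR (a k) ^ j) n.
Proof.
  intros a j t n Ht. unfold Sg. induction n; simpl. lra.
  assert (exp (- INR (a n) * t) <= 1).
  { rewrite <- exp_0. apply exp_le. assert (0 <= INR (a n)) by apply pos_INR. nra. }
  assert (0 <= INR (a n) ^ j) by (apply pow_le, pos_INR).
  assert (INR (a n) ^ j * exp (- INR (a n) * t) <= INR (a n) ^ j).
  { rewrite <- (Rmult_1_r (INR (a n) ^ j)) at 2. apply Rmult_le_compat_l; lra. }
  lra.
Qed.

Lemma sumn_pos : forall f n, (forall k, 0 <= f k) -> 0 <= sumn f n.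
Proof. intros f n H. induction n; simpl. lra. specialize (H n). lra. Qed.

Lemma DomN : forall (a : nat -> nat) C p j,
  (forall k, (0 < a k)%nat) -> 0 <= C ->
  (forall m n, (1 <= m)%nat -> INR (countA a m n) <= C * INR m ^ p) ->
  (2 <= j)%nat -> forall N,
  exists K, 0 <= K /\ forall t, 0 <= t ->
    0 <= EU_integrand a j N t <= K * exp (- t / 2).
Proof.
  intros a C p j Ha HC Hcnt Hj N.
  set (M := (p + j)%nat).
  set (Q := INR (fact M) * 2 ^ M).
  set (f := INR (fact (j - 1))).
  set (c1 := exp (- 1 / 2)).
  set (cN := sumn (fun k => INR (a k) ^ j) (S (N - 1))).
  assert (Hf : 0 < f) by apply INR_fact_lt_0.
  assert (HQ : 0 <= Q) by (apply Rmult_le_pos; [apply pos_INR | apply pow_le; lra]).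
  assert (HcN : 0 <= cN) by (apply sumn_pos; intros; apply pow_le, pos_INR).
  assert (Hc1 : c1 < 1) by (unfold c1; rewrite <- exp_0; apply exp_increasing; lra).
  assert (Hc1' : 0 < c1) by apply exp_pos.
  set (K1 := cN * exp (1 / 2) / f).
  set (K2 := C * Q / (f * (1 - c1))).
  assert (HK1 : 0 <= K1).
  { unfold K1. apply Rdiv_le_0_compat; [ | exact Hf]. apply Rmult_le_pos; [ lra | left; apply exp_pos]. }
  assert (HK2 : 0 <= K2).
  { unfold K2. apply Rdiv_le_0_compat. apply Rmult_le_pos; [exact HC|exact HQ].
    apply Rmult_lt_0_compat; lra. }
  exists (K1 + K2). split. lra.
  intros t Ht.
  assert (Hr0 := exp_pos (- t / 2)).
  destruct (g_bound a j N t 1 ltac:(lia) ltac:(lra) ltac:(lra)) as [G0 G].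
  { intros k Hk. apply prod_01. apply fac01; lra. }
  split. exact G0.
  set (X := Sg a j t (S (N - 1))) in *. fold f in G.
  assert (HX : 0 <= X).
  { unfold X, Sg. apply sumn_pos. intros. apply Rmult_le_pos.
    apply pow_le, pos_INR. left; apply exp_pos. }
  destruct (Rle_lt_dec t 1) as [Ht1 | Ht1].
  - assert (T1 : t ^ (j - 1) <= 1) by (apply pow_le_1; lra).
    assert (T0 : 0 <= t ^ (j - 1)) by (apply pow_le; lra).
    assert (XX : X <= cN) by (apply Sg_le; lra).
    assert (Step1 : t ^ (j - 1) * 1 / f * X <= cN / f).
    { unfold Rdiv. rewrite Rmult_1_r. replace (t ^ (j - 1) * / f * X) with (/ f * (t ^ (j - 1) * X)) by ring.
      rewrite (Rmult_comm cN). apply Rmult_le_compat_l. left; apply Rinv_0_lt_compat; lra.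
      rewrite <- (Rmult_1_l cN). apply Rmult_le_compat; lra. }
    assert (Step2 : cN / f <= K1 * exp (- t / 2)).
    { unfold K1. assert (exp (1 / 2) * exp (- t / 2) >= 1).
      { rewrite <- exp_plus. assert (H0 : exp 0 <= exp (1 / 2 + - t / 2)) by (apply exp_le; lra).
        rewrite exp_0 in H0. lra. }
      replace (cN * exp (1 / 2) / f * exp (- t / 2)) with (cN / f * (exp (1 / 2) * exp (- t / 2))) by (field; lra).
      rewrite <- (Rmult_1_r (cN / f)) at 1. apply Rmult_le_compat_l.
      apply Rdiv_le_0_compat; lra. lra. }
    assert (0 <= K2 * exp (- t / 2)) by (apply Rmult_le_pos; lra).
    lra.
  - assert (S1 := SB a C p j t (S (N - 1)) Ha HC Hcnt ltac:(lia) ltac:(lra)).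
    fold M in S1. fold Q in S1. replace (INR (fact M) * 2 ^ M * (exp (- t / 2) / (1 - exp (- t / 2))))
       with (Q * (exp (- t / 2) / (1 - exp (- t / 2)))) in S1 by (unfold Q; ring).
    fold X in S1.
    assert (T1 : t ^ (j - 1) <= t ^ M) by (apply Rle_pow; [lra | unfold M; lia]).
    assert (LT := large_t t ltac:(lra)). fold c1 in LT.
    assert (Step1 : t ^ (j - 1) * 1 / f * X <= t ^ M * X / f).
    { unfold Rdiv. rewrite Rmult_1_r. replace (t ^ M * X * / f) with (t ^ M * / f * X) by ring.
      apply Rmult_le_compat_r. lra. apply Rmult_le_compat_r. left; apply Rinv_0_lt_compat; lra. lra. }
    assert (Step2 : t ^ M * X / f <= C * (Q * (exp (- t / 2) / (1 - c1))) / f).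
    { unfold Rdiv at 1 3. apply Rmult_le_compat_r. left; apply Rinv_0_lt_compat; lra.
      eapply Rle_trans. exact S1. apply Rmult_le_compat_l. lra. apply Rmult_le_compat_l. lra. exact LT. }
    assert (Step3 : C * (Q * (exp (- t / 2) / (1 - c1))) / f = K2 * exp (- t / 2)).
    { unfold K2. field. split; lra. }
    assert (0 <= K1 * exp (- t / 2)) by (apply Rmult_le_pos; lra).
    lra.
Qed.


Lemma Un_cv_ext : forall u v l, (forall n, u n = v n) -> Un_cv u l -> Un_cv v l.
Proof. intros u v l H Hu eps He. destruct (Hu eps He) as [N HN]. exists N. intros n Hn. rewrite <- H. auto. Qed.

Lemma Un_cv_const : forall c, Un_cv (fun _ => c) c.
Proof. intros c eps He. exists 0%nat. intros. unfold Rdist. rewrite Rminus_diag, Rabs_R0. lra. Qed.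

Lemma tele : forall u Sq, (forall m, Rabs (u (S m) - u m) <= Sq (S m) - Sq m) ->
  forall n m, (n <= m)%nat -> Rabs (u m - u n) <= Sq m - Sq n.
Proof.
  intros u Sq H n m Hnm. induction Hnm.
  - rewrite !Rminus_diag, Rabs_R0. lra.
  - specialize (H m). 
    replace (u (S m) - u n) with ((u (S m) - u m) + (u m - u n)) by ring.
    eapply Rle_trans. apply Rabs_triang. lra.
Qed.

Lemma GL : forall (u Sq : nat -> R) W, Un_cv Sq W ->
  (forall n m, (n <= m)%nat -> Rabs (u m - u n) <= Sq m - Sq n) ->
  exists l, Un_cv u l /\ forall n, Rabs (l - u n) <= W - Sq n.
Proof.
  intros u Sq W HS H.
  assert (Hc : Cauchy_crit u).
  { intros eps He. destruct (CV_Cauchy Sq (exist _ W HS) eps He) as [N HN].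
    exists N. intros n m Hn Hm. unfold Rdist in *.
    destruct (le_ge_dec n m).
    - specialize (H n m l). specialize (HN m n Hm Hn).
      rewrite Rabs_minus_sym. eapply Rle_lt_trans. exact H.
      eapply Rle_lt_trans. apply Rle_abs. exact HN.
    - specialize (H m n g). specialize (HN n m Hn Hm).
      eapply Rle_lt_trans. exact H.
      eapply Rle_lt_trans. apply Rle_abs. exact HN. }
  destruct (Rcomplete.R_complete u Hc) as [l Hl].
  exists l. split. exact Hl. intros n.
  apply Rle_plus_epsilon. intros eps He.
  destruct (Hl (eps / 2) ltac:(lra)) as [N1 H1].
  destruct (HS (eps / 2) ltac:(lra)) as [N2 H2].
  set (m := Nat.max n (Nat.max N1 N2)).
  specialize (H1 m ltac:(unfold m; lia)). specialize (H2 m ltac:(unfold m; lia)).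
  specialize (H n m ltac:(unfold m; lia)). unfold Rdist in *.
  replace (l - u n) with ((l - u m) + (u m - u n)) by ring.
  eapply Rle_trans. apply Rabs_triang.
  rewrite Rabs_minus_sym in H1.
  assert (Sq m - W <= eps / 2) by (eapply Rle_trans; [apply Rle_abs | lra]).
  lra.
Qed.

Lemma pow_as_exp : forall x n, 0 < x -> x ^ n = exp (- INR n * (- ln x)).
Proof. intros x n Hx. rewrite <- Rpower_pow by lra. unfold Rpower. f_equal. ring. Qed.

Lemma W_conv : forall (a : nat -> nat) C p j v,
  (forall k, (0 < a k)%nat) -> 0 <= C ->
  (forall m n, (1 <= m)%nat -> INR (countA a m n) <= C * INR m ^ p) ->
  (1 <= j)%nat -> 0 < v < 1 ->
  {W | Un_cv (fun n => sum_f_R0 (fun k => INR (a k) ^ j * v ^ (a k)) n) W}.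
Proof.
  intros a C p j v Ha HC Hcnt Hj Hv.
  apply growing_cv.
  - intros n. simpl. assert (0 <= INR (a (S n)) ^ j * v ^ a (S n)).
    { apply Rmult_le_pos. apply pow_le, pos_INR. apply pow_le; lra. } lra.
  - set (t := - ln v).
    assert (Ht : 0 < t). { unfold t. assert (ln v < 0). { rewrite <- ln_1. apply ln_increasing; lra. } lra. }
    assert (Htq : 0 < t ^ (p + j)) by (apply pow_lt; lra).
    exists (C * (INR (fact (p + j)) * 2 ^ (p + j) * (exp (- t / 2) / (1 - exp (- t / 2)))) / t ^ (p + j)).
    intros y [n ->].
    assert (S1 := SB a C p j t (S n) Ha HC Hcnt Hj Ht).
    rewrite sum_sumn.
    replace (sumn (fun k => INR (a k) ^ j * v ^ a k) (S n)) with (Sg a j t (S n)).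
    2:{ unfold Sg. generalize (S n) as m. intros m. induction m; simpl. reflexivity. rewrite IHm.
        f_equal. f_equal. rewrite pow_as_exp by lra. reflexivity. }
    apply Rmult_le_reg_l with (t ^ (p + j)). exact Htq.
    unfold Rdiv. rewrite (Rmult_comm _ (/ _)), <- Rmult_assoc, Rinv_r, Rmult_1_l by lra.
    exact S1.
Qed.

Definition Lp (a : nat -> nat) (j n : nat) (x : R) : R :=
  sum_f_R0 (fun k => INR (a k) ^ j * x ^ (a k) / (1 - x ^ (a k))) n.
Definition Fp (a : nat -> nat) (n : nat) (x : R) : R :=
  prod_f_R0 (fun k => 1 - x ^ (a k)) n.
Definition Wn (a : nat -> nat) (j : nat) (v : R) (n : nat) : R :=
  sum_f_R0 (fun k => INR (a k) ^ j * v ^ (a k)) n.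

Lemma xpow_facts : forall x v m, (0 < m)%nat -> 0 <= x <= v -> v < 1 ->
  0 <= x ^ m <= v ^ m /\ v ^ m <= v.
Proof.
  intros x v m Hm Hx Hv. split. split. apply pow_le; lra. apply pow_incr; lra.
  replace m with (S (m - 1)) by lia. simpl.
  assert (v ^ (m - 1) <= 1) by (apply pow_le_1; lra).
  assert (0 <= v ^ (m - 1)) by (apply pow_le; lra). nra.
Qed.

Lemma L_facts : forall a j x v W, (forall k, (0 < a k)%nat) -> 0 < x <= v -> v < 1 ->
  Un_cv (Wn a j v) W ->
  Un_cv (fun n => Lp a j n x) (Lfun a j x) /\
  (forall n, Rabs (Lfun a j x - Lp a j n x) <= (W - Wn a j v n) / (1 - v)) /\
  0 <= Lfun a j x <= W / (1 - v).
Proof.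
  intros a j x v W Ha Hx Hv HW.
  set (An := fun k => INR (a k) ^ j * v ^ (a k) / (1 - v)).
  assert (HAn : Un_cv (fun n => sum_f_R0 An n) (W / (1 - v))).
  { apply Un_cv_ext with (fun n => Wn a j v n * / (1 - v)).
    { intros n. unfold Wn, An. rewrite Rmult_comm, scal_sum. reflexivity. }
    apply CV_mult. exact HW. apply Un_cv_const. }
  set (fn := fun k y => INR (a k) ^ j * y ^ (a k) / (1 - y ^ (a k))).
  assert (Hterm : forall k, 0 <= fn k x <= An k).
  { intros k. unfold fn, An. destruct (xpow_facts x v (a k) (Ha k) ltac:(lra) Hv) as [[H1 H2] H3].
    assert (0 <= INR (a k) ^ j) by (apply pow_le, pos_INR).
    split. apply Rdiv_le_0_compat. apply Rmult_le_pos; lra. lra.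
    unfold Rdiv. rewrite !Rmult_assoc. apply Rmult_le_compat_l. lra.
    apply Rmult_le_compat; try lra. left; apply Rinv_0_lt_compat; lra.
    apply Rinv_le_contravar; lra. }
  destruct (Rseries_CV_comp (fun k => fn k x) An Hterm (exist _ _ HAn)) as [l Hl].
  assert (El : Lfun a j x = l). { unfold Lfun. apply Rlim_eq. exact Hl. }
  rewrite El. split; [|split].
  - exact Hl.
  - intros n. assert (H := sum_maj1 fn An x l (W / (1 - v)) n Hl HAn).
    replace ((W - Wn a j v n) / (1 - v)) with (W / (1 - v) - sum_f_R0 An n).
    apply H. intros k. rewrite Rabs_right. apply Hterm. apply Rle_ge, Hterm.
    assert (E : sum_f_R0 An n = Wn a j v n / (1 - v)).
    { unfold Wn, An, Rdiv. rewrite Rmult_comm, scal_sum. reflexivity. }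
    rewrite E. field. lra.
  - split.
    + apply Rle_cv_lim with (fun _ => 0) (fun n => sum_f_R0 (fun k => fn k x) n).
      intros n. apply cond_pos_sum. intros k. apply Hterm. apply Un_cv_const. exact Hl.
    + assert (H := sum_cv_maj An fn x l (W / (1 - v)) Hl HAn).
      eapply Rle_trans. apply Rle_abs. apply H.
      intros k. rewrite Rabs_right. apply Hterm. apply Rle_ge, Hterm.
Qed.

Lemma F_facts : forall a j x v W, (forall k, (0 < a k)%nat) -> 0 < x <= v -> v < 1 ->
  Un_cv (Wn a j v) W ->
  Un_cv (fun n => Fp a n x) (Ffun a x) /\
  (forall n, Rabs (Ffun a x - Fp a n x) <= W - Wn a j v n) /\
  0 <= Ffun a x <= 1.
Proof.
  intros a j x v W Ha Hx Hv HW.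
  assert (Hfac : forall i, 0 <= 1 - x ^ (a i) <= 1).
  { intros i. destruct (xpow_facts x v (a i) (Ha i) ltac:(lra) Hv) as [[H1 H2] H3]. lra. }
  destruct (GL (fun n => Fp a n x) (Wn a j v) W HW) as [l [Hl Hb]].
  { apply tele. intros m. unfold Fp, Wn. simpl prod_f_R0. rewrite tech5.
    destruct (prod_01 _ m Hfac).
    destruct (xpow_facts x v (a (S m)) (Ha (S m)) ltac:(lra) Hv) as [[H1 H2] H3].
    assert (1 <= INR (a (S m)) ^ j).
    { apply pow_R1_Rle. assert (H4 := Ha (S m)). apply le_INR in H4. simpl in H4. lra. }
    replace (prod_f_R0 (fun k => 1 - x ^ a k) m * (1 - x ^ a (S m)) - prod_f_R0 (fun k => 1 - x ^ a k) m)
      with (- (prod_f_R0 (fun k => 1 - x ^ a k) m * x ^ a (S m))) by ring.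
    rewrite Rabs_Ropp, Rabs_right by (apply Rle_ge, Rmult_le_pos; lra).
    replace (sum_f_R0 (fun k => INR (a k) ^ j * v ^ a k) m + INR (a (S m)) ^ j * v ^ a (S m) -
      sum_f_R0 (fun k => INR (a k) ^ j * v ^ a k) m) with (INR (a (S m)) ^ j * v ^ a (S m)) by ring.
    apply Rle_trans with (1 * x ^ a (S m)). apply Rmult_le_compat_r; lra.
    apply Rmult_le_compat; lra. }
  assert (El : Ffun a x = l). { unfold Ffun. apply Rlim_eq. exact Hl. }
  rewrite El. split; [exact Hl | split; [exact Hb |]].
  split.
  - apply Rle_cv_lim with (fun _ => 0) (fun n => Fp a n x).
    intros n. apply prod_01, Hfac. apply Un_cv_const. exact Hl.
  - apply Rle_cv_lim with (fun n => Fp a n x) (fun _ => 1).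
    intros n. apply prod_01, Hfac. exact Hl. apply Un_cv_const.
Qed.


Lemma prod_ext : forall f g n, (forall i, (i <= n)%nat -> f i = g i) -> prod_f_R0 f n = prod_f_R0 g n.
Proof.
  intros f g n H. induction n; simpl. apply H; lia.
  rewrite IHn by (intros; apply H; lia). rewrite H by lia. reflexivity.
Qed.

Lemma prod_S : forall f n, prod_f_R0 f (S n) = prod_f_R0 f n * f (S n).
Proof. reflexivity. Qed.

Lemma prod_noskip : forall c k n, (n < k)%nat ->
  prod_f_R0 (fun i => if Nat.eq_dec i k then 1 else c i) n = prod_f_R0 c n.
Proof.
  intros c k n H. apply prod_ext. intros i Hi. destruct (Nat.eq_dec i k). lia. reflexivity.
Qed.

Lemma prod_skip : forall c k n, (k <= n)%nat ->
  prod_f_R0 (fun i => if Nat.eq_dec i k then 1 else c i) n * c k = prod_f_R0 c n.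
Proof.
  intros c k n. induction n; intros H.
  - assert (k = 0%nat) by lia. subst. simpl. lra.
  - destruct (Nat.eq_dec k (S n)).
    + subst. rewrite prod_S. cbv beta. rewrite prod_noskip by lia.
      destruct (Nat.eq_dec (S n) (S n)). rewrite prod_S; ring. lia.
    + rewrite !prod_S. cbv beta. destruct (Nat.eq_dec (S n) k). lia.
      rewrite <- IHn by lia. ring.
Qed.

Definition fN (a : nat -> nat) (j N : nat) (x : R) : R := EU_integrand a j N (- ln x) / x.

Lemma fN_eq : forall a j N x, (forall k, (0 < a k)%nat) -> (1 <= j)%nat -> 0 < x < 1 ->
  fN a j N x = / INR (fact (j - 1)) * Lp a j (N - 1) x * Fp a (N - 1) x * Rabs (ln x) ^ (j - 1) / x.
Proof.
  intros a j N x Ha Hj Hx.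
  unfold fN, EU_integrand, Lp, Fp.
  assert (Hln : ln x < 0) by (rewrite <- ln_1; apply ln_increasing; lra).
  assert (Hf := INR_fact_lt_0 (j - 1)).
  assert (Hpos : forall k, 0 < 1 - x ^ a k).
  { intros k. destruct (xpow_facts x x (a k) (Ha k) ltac:(lra) ltac:(lra)) as [[H1 H2] H3].
    assert (x ^ a k < 1). { replace (a k) with (S (a k - 1)) by (specialize (Ha k); lia). simpl.
      assert (x ^ (a k - 1) <= 1) by (apply pow_le_1; lra).
      assert (0 <= x ^ (a k - 1)) by (apply pow_le; lra). nra. }
    lra. }
  set (P := prod_f_R0 (fun k => 1 - x ^ a k) (N - 1)).
  set (c := Rabs (ln x) ^ (j - 1) / INR (fact (j - 1)) * P).
  transitivity (sum_f_R0 (fun k => INR (a k) ^ j * x ^ a k / (1 - x ^ a k)) (N - 1) * c / x).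
  2:{ unfold c. field. lra. }
  f_equal. rewrite (Rmult_comm _ c), scal_sum. apply sum_eq. intros k Hk.
  rewrite (prod_ext _ (fun i => if Nat.eq_dec i k then 1 else (fun i => 1 - x ^ a i) i)).
  2:{ intros i _. destruct (Nat.eq_dec i k). reflexivity. rewrite pow_as_exp by lra. reflexivity. }
  assert (Hs := prod_skip (fun i => 1 - x ^ a i) k (N - 1) Hk). fold P in Hs.
  set (Q := prod_f_R0 (fun i => if Nat.eq_dec i k then 1 else 1 - x ^ a i) (N - 1)) in *.
  assert (EQ : Q = P / (1 - x ^ a k)). { rewrite <- Hs. field. specialize (Hpos k). lra. }
  rewrite EQ. unfold c. rewrite <- pow_as_exp by lra.
  rewrite Rabs_left by lra.
  set (j1 := (j - 1)%nat) in *. assert (Ej : j = S j1) by (unfold j1; lia). rewrite Ej.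
  rewrite Rpow_mult_distr. rewrite <- tech_pow_Rmult. specialize (Hpos k). field. split; lra.
Qed.

Lemma ln_le : forall x y, 0 < x -> x <= y -> ln x <= ln y.
Proof. intros x y Hx H. destruct H. left; apply ln_increasing; auto. subst; lra. Qed.

Lemma unif_bound : forall a j u v W N x, (forall k, (0 < a k)%nat) -> (1 <= j)%nat ->
  0 < u -> u <= x <= v -> v < 1 -> Un_cv (Wn a j v) W ->
  Rabs (fN a j N x - I_integrand a j x) <=
  (Rabs (ln u) ^ (j - 1) / (INR (fact (j - 1)) * u)) *
  ((W - Wn a j v (N - 1)) * (1 + W) / (1 - v)).
Proof.
  intros a j u v W N x Ha Hj Hu Hx Hv HW.
  rewrite fN_eq by (auto; lra).
  destruct (L_facts a j x v W Ha ltac:(lra) Hv HW) as [_ [HL1 HL2]].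
  destruct (F_facts a j x v W Ha ltac:(lra) Hv HW) as [_ [HF1 HF2]].
  specialize (HL1 (N - 1)%nat). specialize (HF1 (N - 1)%nat).
  set (L := Lfun a j x) in *. set (F := Ffun a x) in *.
  set (l := Lp a j (N - 1) x) in *. set (p := Fp a (N - 1) x) in *.
  set (e := W - Wn a j v (N - 1)) in *.
  assert (Hp : 0 <= p <= 1).
  { unfold p, Fp. apply prod_01. intros i.
    destruct (xpow_facts x v (a i) (Ha i) ltac:(lra) Hv) as [[H1 H2] H3]. lra. }
  assert (He : 0 <= e) by (eapply Rle_trans; [apply Rabs_pos | exact HF1]).
  assert (HW0 : 0 <= W). { assert (0 <= W / (1 - v)) by lra.
    apply Rmult_le_reg_r with (/ (1 - v)). apply Rinv_0_lt_compat; lra. lra. }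
  assert (Hf := INR_fact_lt_0 (j - 1)).
  assert (Hln : ln x < 0) by (rewrite <- ln_1; apply ln_increasing; lra).
  assert (Hlnu : ln u <= ln x) by (apply ln_le; lra).
  set (c := Rabs (ln x) ^ (j - 1) / (INR (fact (j - 1)) * x)).
  set (c0 := Rabs (ln u) ^ (j - 1) / (INR (fact (j - 1)) * u)).
  assert (Hc : 0 <= c <= c0).
  { unfold c, c0. split. apply Rdiv_le_0_compat. apply pow_le, Rabs_pos. apply Rmult_lt_0_compat; lra.
    unfold Rdiv. apply Rmult_le_compat. apply pow_le, Rabs_pos.
    left; apply Rinv_0_lt_compat, Rmult_lt_0_compat; lra.
    apply pow_incr. split. apply Rabs_pos. rewrite !Rabs_left by lra. lra.
    apply Rinv_le_contravar. apply Rmult_lt_0_compat; lra. apply Rmult_le_compat_l; lra. }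
  replace (/ INR (fact (j - 1)) * l * p * Rabs (ln x) ^ (j - 1) / x - I_integrand a j x)
    with (c * ((l - L) * p + L * (p - F))).
  2:{ unfold I_integrand, c. fold L F. field. split; lra. }
  rewrite Rabs_mult, Rabs_right by lra.
  apply Rmult_le_compat; try lra. apply Rabs_pos.
  eapply Rle_trans. apply Rabs_triang. rewrite !Rabs_mult.
  rewrite (Rabs_right p) by lra. rewrite (Rabs_right L) by lra.
  rewrite Rabs_minus_sym in HL1. rewrite Rabs_minus_sym in HF1.
  assert (Rabs (l - L) * p <= e / (1 - v)).
  { rewrite <- (Rmult_1_r (e / (1 - v))). apply Rmult_le_compat; try lra. apply Rabs_pos. }
  assert (L * Rabs (p - F) <= W / (1 - v) * e).
  { apply Rmult_le_compat; try lra. apply Rabs_pos. }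
  replace (e * (1 + W) / (1 - v)) with (e / (1 - v) + W / (1 - v) * e) by (field; lra).
  lra.
Qed.


Lemma cont_sum : forall (F : nat -> R -> R) n t, (forall k, continuous (F k) t) ->
  continuous (fun t => sum_f_R0 (fun k => F k t) n) t.
Proof.
  intros F n t H. induction n.
  - simpl. apply H.
  - simpl. apply (continuous_plus (fun t => sum_f_R0 (fun k => F k t) n) (F (S n))). exact IHn. apply H.
Qed.

Lemma cont_prod : forall (F : nat -> R -> R) n t, (forall k, continuous (F k) t) ->
  continuous (fun t => prod_f_R0 (fun k => F k t) n) t.
Proof.
  intros F n t H. induction n.
  - simpl. apply H.
  - simpl. apply (continuous_mult (fun t => prod_f_R0 (fun k => F k t) n) (F (S n))). exact IHn. apply H.
Qed.

Lemma g_cont : forall a j N t, continuous (EU_integrand a j N) t.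
Proof.
  intros a j N t. unfold EU_integrand.
  apply (cont_sum (fun k t => INR (a k) * exp (- INR (a k) * t) * (INR (a k) * t) ^ (j - 1) / INR (fact (j - 1)) *
      prod_f_R0 (fun i => if Nat.eq_dec i k then 1 else 1 - exp (- INR (a i) * t)) (N - 1))).
  intros k.
  apply (continuous_mult (fun t => INR (a k) * exp (- INR (a k) * t) * (INR (a k) * t) ^ (j - 1) / INR (fact (j - 1)))
    (fun t => prod_f_R0 (fun i => if Nat.eq_dec i k then 1 else 1 - exp (- INR (a i) * t)) (N - 1))).
  - apply (@ex_derive_continuous R_AbsRing R_NormedModule). auto_derive. auto.
  - apply (cont_prod (fun i t => if Nat.eq_dec i k then 1 else 1 - exp (- INR (a i) * t))).
    intros i. destruct (Nat.eq_dec i k). apply continuous_const.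
    apply (@ex_derive_continuous R_AbsRing R_NormedModule). auto_derive. auto.
Qed.

Lemma fN_cont : forall a j N x, 0 < x -> continuous (fN a j N) x.
Proof.
  intros a j N x Hx. unfold fN.
  apply (continuous_mult (fun x => EU_integrand a j N (- ln x)) (fun x => / x)).
  - apply (continuous_comp (fun x => - ln x) (EU_integrand a j N)).
    apply (@ex_derive_continuous R_AbsRing R_NormedModule). auto_derive. lra.
    apply g_cont.
  - apply (@ex_derive_continuous R_AbsRing R_NormedModule). auto_derive. lra.
Qed.

Lemma fN_int : forall a j N u v, 0 < u -> u <= v -> ex_RInt (fN a j N) u v.
Proof.
  intros a j N u v Hu Huv. apply (@ex_RInt_continuous R_CompleteNormedModule). intros z Hz.
  apply fN_cont. rewrite Rmin_left in Hz by lra. lra.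
Qed.

Lemma g_int : forall a j N u v, ex_RInt (EU_integrand a j N) u v.
Proof. intros. apply (@ex_RInt_continuous R_CompleteNormedModule). intros; apply g_cont. Qed.

Lemma subst_eq : forall a j N u, 0 < u <= 1 ->
  RInt (fN a j N) u 1 = RInt (EU_integrand a j N) 0 (- ln u).
Proof.
  intros a j N u Hu.
  assert (H := @is_RInt_comp R_CompleteNormedModule (EU_integrand a j N) (fun y => - ln y) (fun y => - / y) u 1).
  assert (H' : is_RInt (fun y => scal (- / y) (EU_integrand a j N (- ln y))) u 1
     (RInt (EU_integrand a j N) (- ln u) (- ln 1))).
  { apply H.
    - intros x Hx. apply g_cont.
    - intros x Hx. rewrite Rmin_left in Hx by lra. split.
      + auto_derive. lra. field. lra.
      + apply (@ex_derive_continuous R_AbsRing R_NormedModule). auto_derive. lra. }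
  apply is_RInt_opp in H'.
  rewrite ln_1, Ropp_0 in H'.
  assert (E := @opp_RInt_swap R_CompleteNormedModule (EU_integrand a j N) 0 (- ln u) (g_int a j N 0 (- ln u))).
  apply (@is_RInt_unique R_CompleteNormedModule) in H'.
  assert (E2 : RInt (fN a j N) u 1 = RInt (fun y => opp (scal (- / y) (EU_integrand a j N (- ln y)))) u 1).
  { apply RInt_ext. intros x Hx. rewrite Rmin_left in Hx by lra. unfold fN.
    enough (EE : EU_integrand a j N (- ln x) / x = - ((- / x) * EU_integrand a j N (- ln x))) by exact EE.
    field. lra. }
  rewrite E2. etransitivity. exact H'. rewrite <- E. exact (opp_opp (RInt (EU_integrand a j N) 0 (- ln u))).
Qed.

Lemma dom_int : forall a b, 0 < a <= b ->
  ex_RInt (fun x => / sqrt x) a b /\ RInt (fun x => / sqrt x) a b = 2 * (sqrt b - sqrt a).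
Proof.
  intros a b Hab.
  assert (H : is_RInt (fun x => / sqrt x) a b (minus (2 * sqrt b) (2 * sqrt a))).
  { apply (@is_RInt_derive R_CompleteNormedModule (fun x => 2 * sqrt x)).
    - intros x Hx. rewrite Rmin_left in Hx by lra. auto_derive. lra.
      assert (0 < sqrt x) by (apply sqrt_lt_R0; lra). field. lra.
    - intros x Hx. rewrite Rmin_left in Hx by lra.
      apply (@ex_derive_continuous R_AbsRing R_NormedModule). auto_derive.
      split. lra. assert (0 < sqrt x) by (apply sqrt_lt_R0; lra). lra. }
  split. exists (minus (2 * sqrt b) (2 * sqrt a)). exact H.
  apply (@is_RInt_unique R_CompleteNormedModule) in H. rewrite H.
  unfold minus, plus, opp. simpl. ring.
Qed.

Lemma fN_bound : forall a j N K, (1 <= j)%nat ->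
  (forall t, 0 <= t -> EU_integrand a j N t <= K * exp (- t / 2)) ->
  forall x, 0 < x <= 1 -> 0 <= fN a j N x <= K / sqrt x.
Proof.
  intros a j N K Hj HK x Hx.
  assert (Hln : ln x <= 0) by (rewrite <- ln_1; apply ln_le; lra).
  destruct (g_bound a j N (- ln x) 1 Hj ltac:(lra) ltac:(lra)) as [G0 _].
  { intros k Hk. apply prod_01. apply fac01; lra. }
  unfold fN. split. apply Rdiv_le_0_compat; lra.
  assert (E : exp (- - ln x / 2) = sqrt x).
  { rewrite <- Rpower_sqrt by lra. unfold Rpower. f_equal. field. }
  specialize (HK (- ln x) ltac:(lra)). rewrite E in HK.
  assert (Hs : 0 < sqrt x) by (apply sqrt_lt_R0; lra).
  assert (Hss : sqrt x * sqrt x = x) by (apply sqrt_sqrt; lra).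
  replace (K / sqrt x) with (K * sqrt x / x).
  2:{ set (s := sqrt x) in *. rewrite <- Hss. field. lra. }
  unfold Rdiv. apply Rmult_le_compat_r. left; apply Rinv_0_lt_compat; lra. exact HK.
Qed.


Lemma abs_int_bound : forall f K a b, 0 <= K -> 0 < a <= b -> ex_RInt f a b ->
  (forall x, a < x < b -> Rabs (f x) <= K / sqrt x) ->
  Rabs (RInt f a b) <= 2 * K * (sqrt b - sqrt a).
Proof.
  intros f K a b HK Hab Hf Hb.
  destruct (dom_int a b Hab) as [Hd Ed].
  assert (Hd' : ex_RInt (fun x => K * / sqrt x) a b).
  { apply (ex_RInt_scal (V := R_NormedModule) _ _ _ K) in Hd. exact Hd. }
  assert (Ed' : RInt (fun x => K * / sqrt x) a b = K * (2 * (sqrt b - sqrt a))).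
  { rewrite <- Ed. apply (@RInt_scal R_CompleteNormedModule). exact Hd. }
  assert (Hd'' : ex_RInt (fun x => - (K * / sqrt x)) a b).
  { apply (ex_RInt_opp (V := R_NormedModule)) in Hd'. exact Hd'. }
  assert (Ed'' : RInt (fun x => - (K * / sqrt x)) a b = - (K * (2 * (sqrt b - sqrt a)))).
  { rewrite <- Ed'. apply (@RInt_opp R_CompleteNormedModule). exact Hd'. }
  apply Rabs_le. split.
  - replace (- (2 * K * (sqrt b - sqrt a))) with (- (K * (2 * (sqrt b - sqrt a)))) by ring.
    rewrite <- Ed''. apply RInt_le; try lra; auto.
    intros x Hx. specialize (Hb x Hx). apply Rabs_le_between in Hb. unfold Rdiv in Hb. lra.
  - replace (2 * K * (sqrt b - sqrt a)) with (K * (2 * (sqrt b - sqrt a))) by ring.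
    rewrite <- Ed'. apply RInt_le; try lra; auto.
    intros x Hx. specialize (Hb x Hx). apply Rabs_le_between in Hb. unfold Rdiv in Hb. lra.
Qed.

Definition uu (n : nat) : R := / (INR n + 2) ^ 2.
Definition vv (n : nat) : R := 1 - / (INR n + 2).

Lemma nest : forall f K u' u v v', 0 <= K -> 0 < u' -> u' <= u -> u <= v -> v <= v' ->
  (forall a b, 0 < a -> a <= b -> b <= v' -> ex_RInt f a b) ->
  (forall x, u' < x < v' -> Rabs (f x) <= K / sqrt x) ->
  Rabs (RInt f u' v' - RInt f u v) <= 2 * K * ((sqrt u - sqrt u') + (sqrt v' - sqrt v)).
Proof.
  intros f K u' u v v' HK Hu' H1 H2 H3 Hint Hb.
  assert (E1 := @RInt_Chasles R_CompleteNormedModule f u' u v' (Hint u' u ltac:(lra) ltac:(lra) ltac:(lra)) (Hint u v' ltac:(lra) ltac:(lra) ltac:(lra))).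
  assert (E2 := @RInt_Chasles R_CompleteNormedModule f u v v' (Hint u v ltac:(lra) ltac:(lra) ltac:(lra)) (Hint v v' ltac:(lra) ltac:(lra) ltac:(lra))).
  change (RInt f u' u + RInt f u v' = RInt f u' v') in E1.
  change (RInt f u v + RInt f v v' = RInt f u v') in E2.
  assert (B1 := abs_int_bound f K u' u HK ltac:(lra) (Hint u' u ltac:(lra) ltac:(lra) ltac:(lra))
     ltac:(intros x Hx; apply Hb; lra)).
  assert (B2 := abs_int_bound f K v v' HK ltac:(lra) (Hint v v' ltac:(lra) ltac:(lra) ltac:(lra))
     ltac:(intros x Hx; apply Hb; lra)).
  replace (RInt f u' v' - RInt f u v) with (RInt f u' u + RInt f v v') by lra.
  eapply Rle_trans. apply Rabs_triang. lra.
Qed.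

Lemma sqrt_ge_id : forall v, 0 <= v <= 1 -> v <= sqrt v.
Proof.
  intros v Hv. destruct (Req_dec v 0). subst. rewrite sqrt_0. lra.
  assert (0 < sqrt v) by (apply sqrt_lt_R0; lra).
  assert (sqrt v <= 1) by (rewrite <- sqrt_1; apply sqrt_le_1_alt; lra).
  assert (Hs : sqrt v * sqrt v = v) by (apply sqrt_sqrt; lra). nra.
Qed.

Lemma uu_facts : forall n, 0 < uu n /\ sqrt (uu n) = / (INR n + 2) /\ uu n <= / (INR n + 2).
Proof.
  intros n. assert (Hn : 0 <= INR n) by apply pos_INR.
  unfold uu. split. apply Rinv_0_lt_compat, pow_lt; lra. split.
  rewrite sqrt_inv, sqrt_pow2 by lra. reflexivity.
  apply Rinv_le_contravar. lra. simpl. nra.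
Qed.

Lemma vv_facts : forall n, 1/2 <= vv n < 1 /\ 1 - sqrt (vv n) <= / (INR n + 2).
Proof.
  intros n. assert (Hn : 0 <= INR n) by apply pos_INR.
  assert (0 < / (INR n + 2) <= / 2) by (split; [apply Rinv_0_lt_compat; lra | apply Rinv_le_contravar; lra]).
  unfold vv. split. lra. assert (Hs := sqrt_ge_id (1 - / (INR n + 2)) ltac:(lra)). lra.
Qed.

Lemma uu_vv_mono : forall n m, (n <= m)%nat -> uu m <= uu n /\ vv n <= vv m /\ uu n <= vv n.
Proof.
  intros n m H. apply le_INR in H. assert (Hn : 0 <= INR n) by apply pos_INR.
  destruct (uu_facts n) as [_ [_ U]]. destruct (vv_facts n) as [[V _] _].
  assert (/ (INR n + 2) <= / 2) by (apply Rinv_le_contravar; lra).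
  split; [|split]; [| |lra].
  - unfold uu. apply Rinv_le_contravar. apply pow_lt; lra. apply pow_incr. lra.
  - unfold vv. assert (/ (INR m + 2) <= / (INR n + 2)) by (apply Rinv_le_contravar; lra). lra.
Qed.

Lemma improper01 : forall f K, 0 <= K ->
  (forall a b, 0 < a -> a <= b -> b < 1 -> ex_RInt f a b) ->
  (forall x, 0 < x < 1 -> Rabs (f x) <= K / sqrt x) ->
  Un_cv (fun n => RInt f (uu n) (vv n)) (Rlim (fun n => RInt f (uu n) (vv n))) /\
  forall u v, 0 < u -> u <= v -> v < 1 ->
    Rabs (RInt f u v - Rlim (fun n => RInt f (uu n) (vv n))) <= 2 * K * (sqrt u + (1 - sqrt v)).
Proof.
  intros f K HK Hint Hb.
  set (s := fun n => RInt f (uu n) (vv n)).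
  assert (Hnest : forall u' u v v', 0 < u' -> u' <= u -> u <= v -> v <= v' -> v' < 1 ->
    Rabs (RInt f u' v' - RInt f u v) <= 2 * K * (sqrt u + (1 - sqrt v))).
  { intros u' u v v' H0 H1 H2 H3 H4.
    eapply Rle_trans. apply (nest f K u' u v v'); [lra|lra|lra|lra|lra| |].
    intros a b Ha Hab Hbv. apply Hint; lra.
    intros x Hx. apply Hb. lra.
    assert (0 <= sqrt u') by apply sqrt_pos.
    assert (sqrt v' <= 1) by (rewrite <- sqrt_1; apply sqrt_le_1_alt; lra).
    apply Rmult_le_compat_l. lra. lra. }
  assert (Hc : forall n m, (n <= m)%nat -> Rabs (s m - s n) <= 4 * K * / (INR n + 2)).
  { intros n m Hnm. destruct (uu_vv_mono n m Hnm) as [A1 [A2 A3]].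
    destruct (uu_facts m) as [U0 _]. destruct (vv_facts m) as [[V0 V1] _].
    destruct (uu_facts n) as [_ [U2 _]]. destruct (vv_facts n) as [_ V3].
    eapply Rle_trans. apply Hnest; lra. rewrite U2. replace (4 * K * / (INR n + 2)) with (2 * K * (2 * / (INR n + 2))) by ring. apply Rmult_le_compat_l; lra. }
  assert (HC : Cauchy_crit s).
  { intros eps He.
    destruct (INR_unbounded (4 * K / eps)) as [N HN].
    exists N. intros n m Hn Hm. unfold Rdist.
    assert (Hbnd : forall n m, (N <= n)%nat -> (n <= m)%nat -> Rabs (s m - s n) < eps).
    { intros n0 m0 Hn0 Hnm0. eapply Rle_lt_trans. apply Hc. exact Hnm0.
      apply le_INR in Hn0. assert (HN0 : 0 <= INR N) by apply pos_INR.
      apply Rmult_lt_reg_r with (INR n0 + 2). lra.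
      rewrite Rmult_assoc, Rinv_l by lra.
      assert (4 * K < eps * INR N).
      { assert (eps * (4 * K / eps) = 4 * K) by (field; lra).
        assert (eps * (INR N - 4 * K / eps) > 0) by (apply Rmult_gt_0_compat; lra). nra. }
      nra. }
    destruct (le_ge_dec n m). rewrite Rabs_minus_sym. apply Hbnd; lia. apply Hbnd; lia. }
  destruct (Rcomplete.R_complete s HC) as [l Hl].
  assert (El : Rlim s = l) by (apply Rlim_eq; exact Hl).
  fold s. rewrite El. split. exact Hl.
  intros u v Hu Huv Hv.
  apply Rle_plus_epsilon. intros eps He.
  destruct (Hl eps He) as [N1 HN1].
  destruct (INR_unbounded (Rmax (/ u) (/ (1 - v)))) as [N2 HN2].
  set (m := Nat.max N1 N2).
  specialize (HN1 m ltac:(unfold m; lia)). unfold Rdist in HN1.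
  assert (Hm : INR N2 <= INR m) by (apply le_INR; unfold m; lia).
  assert (HM1 := Rmax_l (/ u) (/ (1 - v))). assert (HM2 := Rmax_r (/ u) (/ (1 - v))).
  destruct (uu_facts m) as [U0 [_ U2]]. destruct (vv_facts m) as [[V0 V1] _].
  assert (Hm0 : 0 <= INR m) by apply pos_INR.
  assert (Hu2 : uu m <= u).
  { eapply Rle_trans. exact U2. rewrite <- (Rinv_inv u).
    apply Rinv_le_contravar. apply Rinv_0_lt_compat; lra. lra. }
  assert (Hv2 : v <= vv m).
  { unfold vv. assert (/ (INR m + 2) <= 1 - v).
    { rewrite <- (Rinv_inv (1 - v)). apply Rinv_le_contravar. apply Rinv_0_lt_compat; lra. lra. }
    lra. }
  assert (HH := Hnest (uu m) u v (vv m) U0 Hu2 Huv Hv2 V1). fold s in HH. unfold s in HH.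
  change (RInt f (uu m) (vv m)) with (s m) in HH.
  replace (RInt f u v - l) with ((s m - l) - (s m - RInt f u v)) by ring.
  eapply Rle_trans. apply Rabs_triang. rewrite Rabs_Ropp. lra.
Qed.


Definition clamp (u v x : R) : R := Rmax u (Rmin v x).

Lemma clamp_in : forall u v x, u <= v -> u <= clamp u v x <= v.
Proof. intros. unfold clamp. unfold Rmax, Rmin. repeat destruct Rle_dec; lra. Qed.

Lemma clamp_id : forall u v x, u <= x <= v -> clamp u v x = x.
Proof. intros. unfold clamp. unfold Rmax, Rmin. repeat destruct Rle_dec; lra. Qed.

Lemma unif_int : forall (fn : nat -> R -> R) (g : R -> R) u v (d : nat -> R),
  u <= v -> (forall N, ex_RInt (fn N) u v) ->
  (forall N x, u <= x <= v -> Rabs (fn N x - g x) <= d N) -> Un_cv d 0 ->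
  ex_RInt g u v /\ Un_cv (fun N => RInt (fn N) u v) (RInt g u v).
Proof.
  intros fn g u v d Huv Hint Hb Hd.
  set (fc := fun N x => fn N (clamp u v x)).
  set (gc := fun x => g (clamp u v x)).
  assert (Hfc : forall N, is_RInt (fc N) u v (RInt (fn N) u v)).
  { intros N. apply (is_RInt_ext (fn N)). intros x Hx. rewrite Rmin_left, Rmax_right in Hx by lra.
    unfold fc. rewrite clamp_id by lra. reflexivity. apply (RInt_correct (V := R_CompleteNormedModule)). apply Hint. }
  assert (Hlim : filterlim fc eventually (locally (T := fct_UniformSpace R R_CompleteNormedModule) gc)).
  { apply filterlim_locally. intros eps.
    destruct (Hd eps (cond_pos eps)) as [N0 HN0].
    exists N0. intros N HN. intros t.
    specialize (HN0 N HN). unfold Rdist in HN0. rewrite Rminus_0_r in HN0.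
    assert (Hc := clamp_in u v t Huv).
    specialize (Hb N (clamp u v t) Hc).
    change (Rabs (fc N t - gc t) < eps).
    unfold fc, gc. eapply Rle_lt_trans. exact Hb. eapply Rle_lt_trans. apply Rle_abs. exact HN0. }
  destruct (filterlim_RInt fc u v eventually eventually_filter gc (fun N => RInt (fn N) u v) Hfc Hlim)
    as [If [HIf HgI]].
  assert (Hg : is_RInt g u v If).
  { apply (is_RInt_ext gc). intros x Hx. rewrite Rmin_left, Rmax_right in Hx by lra.
    unfold gc. rewrite clamp_id by lra. reflexivity. exact HgI. }
  split. exists If. exact Hg.
  rewrite (is_RInt_unique (V := R_CompleteNormedModule) g u v If Hg).
  intros eps He. apply filterlim_locally with (eps := mkposreal eps He) in HIf.
  destruct HIf as [N0 HN0]. exists N0. intros n Hn. specialize (HN0 n Hn).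
  unfold Rdist. exact HN0.
Qed.


Lemma cv_pred : forall w W, Un_cv w W -> Un_cv (fun N => w (N - 1)%nat) W.
Proof.
  intros w W H eps He. destruct (H eps He) as [N0 HN0]. exists (S N0). intros n Hn. apply HN0. lia.
Qed.

Lemma delta_cv : forall w W c0 c1, Un_cv w W ->
  Un_cv (fun N => c0 * ((W - w (N - 1)%nat) * c1)) 0.
Proof.
  intros w W c0 c1 H.
  apply Un_cv_ext with (fun N => (fun _ => c0) N * (((fun _ => W) N - (fun N => w (N - 1)%nat) N) * (fun _ => c1) N)).
  { intros; reflexivity. }
  replace 0 with (c0 * ((W - W) * c1)) by ring.
  apply CV_mult. apply Un_cv_const. apply CV_mult. apply CV_minus. apply Un_cv_const.
  apply cv_pred. exact H. apply Un_cv_const.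
Qed.

Lemma Phi_facts : forall (a : nat -> nat) C p j u v,
  (forall k, (0 < a k)%nat) -> 0 <= C ->
  (forall m n, (1 <= m)%nat -> INR (countA a m n) <= C * INR m ^ p) ->
  (1 <= j)%nat -> 0 < u -> u <= v -> v < 1 ->
  ex_RInt (I_integrand a j) u v /\
  Un_cv (fun N => RInt (fN a j N) u v) (RInt (I_integrand a j) u v) /\
  (forall x, u <= x <= v -> Un_cv (fun N => fN a j N x) (I_integrand a j x)).
Proof.
  intros a C p j u v Ha HC Hcnt Hj Hu Huv Hv.
  destruct (W_conv a C p j v Ha HC Hcnt Hj ltac:(lra)) as [W HW].
  fold (Wn a j v) in HW.
  set (c0 := Rabs (ln u) ^ (j - 1) / (INR (fact (j - 1)) * u)).
  set (d := fun N => c0 * ((W - Wn a j v (N - 1)) * ((1 + W) / (1 - v)))).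
  assert (Hd : Un_cv d 0) by (apply delta_cv; exact HW).
  assert (Hb : forall N x, u <= x <= v -> Rabs (fN a j N x - I_integrand a j x) <= d N).
  { intros N x Hx. unfold d. eapply Rle_trans. apply (unif_bound a j u v W N x Ha Hj Hu Hx Hv HW).
    right. fold c0. unfold Rdiv. ring. }
  destruct (unif_int (fN a j) (I_integrand a j) u v d Huv (fun N => fN_int a j N u v Hu Huv) Hb Hd)
    as [H1 H2].
  split. exact H1. split. exact H2.
  intros x Hx eps He. destruct (Hd eps He) as [N0 HN0]. exists N0. intros n Hn.
  specialize (HN0 n Hn). unfold Rdist in *. rewrite Rminus_0_r in HN0.
  eapply Rle_lt_trans. apply Hb. exact Hx. eapply Rle_lt_trans. apply Rle_abs. exact HN0.
Qed.


Lemma xa_is_1 : forall (a : nat -> nat) C p xa,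
  (forall k, (0 < a k)%nat) -> 0 <= C ->
  (forall m n, (1 <= m)%nat -> INR (countA a m n) <= C * INR m ^ p) ->
  is_x_alpha a xa -> xa = 1.
Proof.
  intros a C p xa Ha HC Hcnt [H1 H2].
  apply Rle_antisym.
  - apply H1. lra. intros M. destruct (INR_unbounded M) as [n Hn]. exists n.
    rewrite (sum_eq _ (fun _ => 1)) by (intros; apply pow1). rewrite sum_cte, S_INR. lra.
  - apply H2. intros x Hx Hdiv. destruct (Rle_lt_dec 1 x) as [Hl | Hl]. exact Hl. exfalso.
    destruct (Req_dec x 0) as [E | E].
    + subst. destruct (Hdiv 0) as [n Hn].
      rewrite sum_eq_R0 in Hn. lra. intros k _. apply pow_i. apply Ha.
    + destruct (W_conv a C p 1 x Ha HC Hcnt (le_n 1) ltac:(lra)) as [W HW].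
      destruct (Hdiv W) as [n Hn].
      assert (sum_f_R0 (fun k => INR (a k) ^ 1 * x ^ a k) n <= W).
      { apply sum_incr. exact HW. intros k. apply Rmult_le_pos. apply pow_le, pos_INR. apply pow_le; lra. }
      assert (sum_f_R0 (fun k => x ^ a k) n <= sum_f_R0 (fun k => INR (a k) ^ 1 * x ^ a k) n).
      { apply sum_Rle. intros k _. rewrite pow_1. rewrite <- (Rmult_1_l (x ^ a k)) at 1.
        apply Rmult_le_compat_r. apply pow_le; lra.
        assert (H4 := Ha k). apply le_INR in H4. simpl in H4. lra. }
      lra.
Qed.

Definition EUdef (a : nat -> nat) (j N : nat) : R := Rlim (fun n => RInt (fN a j N) (uu n) (vv n)).
Definition Idef (a : nat -> nat) (j : nat) : R := Rlim (fun n => RInt (I_integrand a j) (uu n) (vv n)).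

Lemma HimpN : forall a j N K, (1 <= j)%nat -> 0 <= K ->
  (forall t, 0 <= t -> EU_integrand a j N t <= K * exp (- t / 2)) ->
  forall u v, 0 < u -> u <= v -> v < 1 ->
  Rabs (RInt (fN a j N) u v - EUdef a j N) <= 2 * K * (sqrt u + (1 - sqrt v)).
Proof.
  intros a j N K Hj HK HD.
  destruct (improper01 (fN a j N) K HK) as [_ H].
  - intros a0 b H0 H1 H2. apply fN_int; lra.
  - intros x Hx. destruct (fN_bound a j N K Hj HD x ltac:(lra)). rewrite Rabs_right; lra.
  - exact H.
Qed.

Lemma Himp1 : forall a j N K, (1 <= j)%nat -> 0 <= K ->
  (forall t, 0 <= t -> EU_integrand a j N t <= K * exp (- t / 2)) ->
  forall u, 0 < u < 1 ->
  Rabs (RInt (fN a j N) u 1 - EUdef a j N) <= 2 * K * sqrt u.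
Proof.
  intros a j N K Hj HK HD u Hu.
  apply Rle_plus_epsilon. intros eps He.
  set (v := Rmax u (1 - eps / (4 * K + 1))).
  assert (Hv1 : u <= v) by apply Rmax_l.
  assert (Hv2 : 1 - eps / (4 * K + 1) <= v) by apply Rmax_r.
  assert (He' : 0 < eps / (4 * K + 1)) by (apply Rdiv_lt_0_compat; lra).
  assert (Hv3 : v < 1) by (unfold v, Rmax; destruct Rle_dec; lra).
  assert (A1 := HimpN a j N K Hj HK HD u v ltac:(lra) Hv1 Hv3).
  assert (A2 := abs_int_bound (fN a j N) K v 1 HK ltac:(lra) (fN_int a j N v 1 ltac:(lra) ltac:(lra))
    ltac:(intros x Hx; destruct (fN_bound a j N K Hj HD x ltac:(lra)); rewrite Rabs_right; lra)).
  rewrite sqrt_1 in A2.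
  assert (E := @RInt_Chasles R_CompleteNormedModule (fN a j N) u v 1 (fN_int a j N u v ltac:(lra) Hv1)
     (fN_int a j N v 1 ltac:(lra) ltac:(lra))).
  change (RInt (fN a j N) u v + RInt (fN a j N) v 1 = RInt (fN a j N) u 1) in E.
  rewrite <- E.
  assert (Hs := sqrt_ge_id v ltac:(lra)).
  assert (4 * K * (1 - v) <= eps).
  { assert (1 - v <= eps / (4 * K + 1)) by lra.
    apply Rle_trans with (4 * K * (eps / (4 * K + 1))). apply Rmult_le_compat_l; lra.
    apply Rmult_le_reg_r with (4 * K + 1). lra. unfold Rdiv.
    rewrite Rmult_assoc, (Rmult_assoc eps), Rinv_l by lra. nra. }
  replace (RInt (fN a j N) u v + RInt (fN a j N) v 1 - EUdef a j N) with
    ((RInt (fN a j N) u v - EUdef a j N) + RInt (fN a j N) v 1) by ring.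
  eapply Rle_trans. apply Rabs_triang.
  assert (4 * K * (1 - sqrt v) <= 4 * K * (1 - v)) by (apply Rmult_le_compat_l; lra).
  lra.
Qed.

Lemma sqrt_exp : forall T, sqrt (exp (- T)) = exp (- T / 2).
Proof.
  intros T. replace (exp (- T)) with (exp (- T / 2) * exp (- T / 2)).
  apply sqrt_square. left; apply exp_pos. rewrite <- exp_plus. f_equal. field.
Qed.

Theorem corollary2 :
  forall a : nat -> nat,
    (forall k, (0 < a k)%nat) ->
    (exists nu C : R, 0 < nu /\
       forall m n : nat, (1 <= m)%nat -> INR (countA a m n) <= C * Rpower (INR m) nu) ->
    forall j : nat, (2 <= j)%nat ->
    forall xa : R, is_x_alpha a xa ->
    exists (EU : nat -> R) (I : R),
      (forall N : nat, (2 <= N)%nat -> improper_int_inf (EU_integrand a j N) 0 (EU N)) /\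
      Un_cv EU I /\
      improper_int (I_integrand a j) 0 xa I.
Proof.
  intros a Ha [nu [C [Hnu Hcnt0]]] j Hj xa Hxa.
  assert (HC : 0 <= C).
  { specialize (Hcnt0 1%nat 0%nat (le_n 1)). unfold countA in Hcnt0. simpl in Hcnt0.
    unfold Rpower in Hcnt0. rewrite ln_1, Rmult_0_r, exp_0 in Hcnt0. lra. }
  destruct (INR_unbounded nu) as [p Hp].
  assert (Hcnt : forall m n, (1 <= m)%nat -> INR (countA a m n) <= C * INR m ^ p).
  { intros m n Hm. eapply Rle_trans. apply Hcnt0; auto. apply Rmult_le_compat_l. exact HC.
    apply le_INR in Hm. simpl in Hm. rewrite <- Rpower_pow by lra. apply Rle_Rpower; lra. }
  assert (Exa := xa_is_1 a C p xa Ha HC Hcnt Hxa). subst xa.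
  destruct (Dom a C p j Ha HC Hcnt Hj) as [K [HK HDom]].
  assert (Hj1 : (1 <= j)%nat) by lia.
  assert (HPhi : forall x, 0 < x < 1 -> Rabs (I_integrand a j x) <= K / sqrt x).
  { intros x Hx.
    destruct (Phi_facts a C p j x x Ha HC Hcnt Hj1 ltac:(lra) ltac:(lra) ltac:(lra)) as [_ [_ Hpt]].
    specialize (Hpt x ltac:(lra)).
    apply cv_cvabs in Hpt. apply (CV_shift' _ (S (p + j))) in Hpt.
    eapply Rle_cv_lim; [ | exact Hpt | apply Un_cv_const].
    intros n. cbv beta. destruct (fN_bound a j (n + S (p + j)) K Hj1 (fun t Ht => HDom (n + S (p + j))%nat t ltac:(lia) Ht) x ltac:(lra)).
    rewrite Rabs_right; lra. }
  assert (HimpI : forall u v, 0 < u -> u <= v -> v < 1 ->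
     Rabs (RInt (I_integrand a j) u v - Idef a j) <= 2 * K * (sqrt u + (1 - sqrt v))).
  { destruct (improper01 (I_integrand a j) K HK) as [_ H].
    - intros a0 b H0 H1 H2. destruct (Phi_facts a C p j a0 b Ha HC Hcnt Hj1 H0 H1 H2) as [E _]. exact E.
    - exact HPhi.
    - exact H. }
  exists (EUdef a j), (Idef a j). split; [|split].
  -
    intros N HN. destruct (DomN a C p j Ha HC Hcnt Hj N) as [KN [HKN HDN]].
    assert (HDN' : forall t, 0 <= t -> EU_integrand a j N t <= KN * exp (- t / 2)) by (intros; apply HDN; auto).
    intros eps He.
    set (e' := eps / (2 * KN + 1)).
    assert (He' : 0 < e') by (unfold e'; apply Rdiv_lt_0_compat; lra).
    exists (1 + 2 * Rabs (ln e')). intros T HT HT0.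
    assert (HT1 : 1 <= T) by (assert (0 <= Rabs (ln e')) by apply Rabs_pos; lra).
    assert (pr := ex_RInt_Reals_0 _ _ _ (g_int a j N 0 T)).
    exists pr. rewrite <- RInt_Reals.
    set (u := exp (- T)).
    assert (Hu : 0 < u < 1) by (split; [apply exp_pos | unfold u; rewrite <- exp_0; apply exp_increasing; lra]).
    assert (Eu : - ln u = T) by (unfold u; rewrite ln_exp; ring).
    rewrite <- Eu, <- subst_eq by lra.
    eapply Rle_lt_trans. apply (Himp1 a j N KN Hj1 HKN HDN' u Hu).
    unfold u. rewrite sqrt_exp.
    assert (Hlt : exp (- T / 2) < e').
    { rewrite <- (exp_ln e') by lra. apply exp_increasing.
      assert (- Rabs (ln e') <= ln e') by (destruct (proj1 (Rabs_le_between (ln e') (Rabs (ln e'))) (Rle_refl _)); lra).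
      lra. }
    assert (0 < exp (- T / 2)) by apply exp_pos.
    assert (E2 : (2 * KN + 1) * e' = eps) by (unfold e'; field; lra).
    nra.
  -
    intros eps He.
    set (s := Rmin (1 / 2) (eps / (16 * K + 1))).
    assert (Hs0 : 0 < s) by (unfold s; apply Rmin_glb_lt; [lra | apply Rdiv_lt_0_compat; lra]).
    assert (Hs1 : s <= 1 / 2) by apply Rmin_l.
    assert (Hs2 : s <= eps / (16 * K + 1)) by apply Rmin_r.
    set (u := s * s). set (v := 1 - s).
    assert (Hu0 : 0 < u) by (unfold u; nra).
    assert (Huv : u <= v) by (unfold u, v; nra).
    assert (Hv1 : v < 1) by (unfold v; lra).
    assert (Hsu : sqrt u = s) by (unfold u; apply sqrt_square; lra).
    assert (Hsv := sqrt_ge_id v ltac:(unfold v; lra)).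
    assert (Hrho : 2 * K * (sqrt u + (1 - sqrt v)) <= 4 * K * s).
    { rewrite Hsu. replace (4 * K * s) with (2 * K * (s + s)) by ring.
      apply Rmult_le_compat_l. lra. unfold v in *. lra. }
    assert (H8 : 8 * K * s < eps / 2).
    { apply Rle_lt_trans with (8 * K * (eps / (16 * K + 1))). apply Rmult_le_compat_l; lra.
      apply Rmult_lt_reg_r with (16 * K + 1). lra. unfold Rdiv.
      rewrite Rmult_assoc, (Rmult_assoc eps), Rinv_l by lra. nra. }
    destruct (Phi_facts a C p j u v Ha HC Hcnt Hj1 Hu0 Huv Hv1) as [_ [Hcv _]].
    destruct (Hcv (eps / 2) ltac:(lra)) as [N1 HN1].
    exists (Nat.max N1 (S (p + j))). intros N HN.
    specialize (HN1 N ltac:(lia)). unfold Rdist in *.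
    assert (A1 := HimpN a j N K Hj1 HK (fun t Ht => HDom N t ltac:(lia) Ht) u v Hu0 Huv Hv1).
    assert (A2 := HimpI u v Hu0 Huv Hv1).
    replace (EUdef a j N - Idef a j) with
      (- (RInt (fN a j N) u v - EUdef a j N) + (RInt (fN a j N) u v - RInt (I_integrand a j) u v)
       + (RInt (I_integrand a j) u v - Idef a j)) by ring.
    eapply Rle_lt_trans. apply Rabs_triang.
    eapply Rle_lt_trans. apply Rplus_le_compat_r. apply Rabs_triang.
    rewrite Rabs_Ropp. lra.
  -
    intros eps He.
    set (s := eps / (4 * K + 1)).
    assert (Hs0 : 0 < s) by (unfold s; apply Rdiv_lt_0_compat; lra).
    set (d := Rmin (Rmin (1 / 2) s) (s * s)).
    assert (Hd0 : 0 < d) by (unfold d; repeat apply Rmin_glb_lt; nra).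
    assert (Hd1 : d <= s) by (unfold d; eapply Rle_trans; [apply Rmin_l | apply Rmin_r]).
    assert (Hd2 : d <= s * s) by (unfold d; apply Rmin_r).
    assert (Hd3 : d <= 1 / 2) by (unfold d; eapply Rle_trans; [apply Rmin_l | apply Rmin_l]).
    exists d. split. exact Hd0.
    intros u v Hu1 Hu2 Hv1 Hv2 Huv.
    destruct (Phi_facts a C p j u v Ha HC Hcnt Hj1 ltac:(lra) Huv ltac:(lra)) as [Hex _].
    exists (ex_RInt_Reals_0 _ _ _ Hex). rewrite <- RInt_Reals.
    eapply Rle_lt_trans. apply HimpI; lra.
    assert (Hsu : sqrt u < s).
    { rewrite <- (sqrt_square s) by lra. apply sqrt_lt_1_alt. lra. }
    assert (Hsv := sqrt_ge_id v ltac:(lra)).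
    assert (4 * K * s < eps).
    { unfold s. apply Rmult_lt_reg_r with (4 * K + 1). lra. unfold Rdiv.
      rewrite Rmult_assoc, (Rmult_assoc eps), Rinv_l by lra. nra. }
    apply Rle_lt_trans with (2 * K * (s + s)).
    apply Rmult_le_compat_l. lra. lra. lra.
Qed.
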